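(* Let $Y$ be any one of the following varieties, or any secant variety $\sigma_r(Y)$, $r\ge1$, of one of them: (a) the Grassmannian $\mathbb{G}(k,n)\subset\mathbb{P}\bigwedge^k\mathbb{C}^n$ in its Plücker embedding, $1\le k<n$; (b) the tangential variety $\tau_{d,n}=\overline{\{[L^{d-1}M]\}}\subset\mathbb{P}\mathrm{Sym}^d\mathbb{C}^{n+1}$, $d,n\ge1$; (c) the Chow variety $\mathbb{X}_{d,n}=\{[L_1\cdots L_d]: L_i\in(\mathbb{C}^{n+1})^\vee\}\subset\mathbb{P}\mathrm{Sym}^d\mathbb{C}^{n+1}$; (d) the variety of reducible forms $\mathcal{R}_{\mathbf{d},n}=\{[F_1\cdots F_k]: F_i\in\mathrm{Sym}^{d_i}\mathbb{C}^{n+1}\}\subset\mathbb{P}\mathrm{Sym}^d\mathbb{C}^{n+1}$ for fixed positive integers $\mathbf{d}=(d_1,\dots,d_k)$ with $d_1+\cdots+d_k=d$. Then $\operatorname{Hrk}_Y(p)<\infty$ for every point $p$ of the ambient projective space. For example, for every $r\ge1$ every homogeneous polynomial of degree $d$ is a coefficient-wise product of finitely many polynomials of the form $\sum_{i=1}^r L_i^{d-1}M_i$ with $L_i,M_i$ linear.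
   Context: Ambient spaces use the standard coordinates: Plücker coordinates on $\mathbb{P}\bigwedge^k\mathbb{C}^n$, monomial coefficients on $\mathbb{P}\mathrm{Sym}^d\mathbb{C}^{n+1}$ (degree-$d$ forms in $x_0,\dots,x_n$). Hadamard product of points: $(p_0:\cdots:p_N)\star(q_0:\cdots:q_N)=(p_0q_0:\cdots:p_Nq_N)$, defined when not all $p_iq_i$ vanish. For a variety $X$, $\operatorname{Hrk}_X(q)=\min\{m\mid q=p_1\star\cdots\star p_m,\ p_i\in X\}$, or $\infty$ if no such decomposition exists. $\sigma_r(Y)$ denotes the Zariski closure of the union of linear spans of $r$ points of $Y$. *)

(* Defs.v *)
From HB Require Import structures.
From mathcomp Require Import all_boot all_order all_algebra.
From mathcomp Require Import reals.
From mathcomp Require Import complex.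
From mathcomp Require Import mpoly.

Set Implicit Arguments.
Unset Strict Implicit.
Unset Printing Implicit Defensive.

Import Order.TTheory GRing.Theory Num.Theory.
Local Open Scope ring_scope.

(* Projective space P(C^I) is represented through affine cones: a vector     *)
(* q : I -> C with some nonzero coordinate represents the point [q]; a       *)
(* projective variety X is represented by its affine cone, a predicate on    *)
(* I -> C.  A point [q] lies in X iff q is a nonzero vector of the cone.     *)

Section Ambient.
Variable (C : fieldType) (I : finType).

Definition nonzero_vec (q : I -> C) : Prop := exists j, q j != 0.

Definition hadamard_prod (m : nat) (ps : 'I_m -> I -> C) : I -> C :=
  fun j => \prod_(i < m) ps i j.

(* [q] = [p_1] * ... * [p_m] with all [p_i] points of X (Hadamard product
   defined, i.e. the product is a nonzero vector, and equal to [q]). *)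
Definition hadamard_decomp (X : (I -> C) -> Prop) (q : I -> C) (m : nat)
  (ps : 'I_m -> I -> C) : Prop :=
  (forall i, X (ps i) /\ nonzero_vec (ps i)) /\
  nonzero_vec (hadamard_prod ps) /\
  exists c : C, c != 0 /\ forall j, q j = c * hadamard_prod ps j.

Definition Hrk_finite (X : (I -> C) -> Prop) (q : I -> C) : Prop :=
  exists m : nat, (0 < m)%N /\ exists ps : 'I_m -> I -> C, hadamard_decomp X q ps.

(* Zariski closure in the affine space C^I (closure of a cone = cone of the
   projective closure). Polynomials in #|I| variables, coordinate j of the
   polynomial ring corresponds to enum_val j. *)
Definition zariski_closure (S : (I -> C) -> Prop) : (I -> C) -> Prop :=
  fun x => forall P : {mpoly C[#|I|]},
    (forall y, S y -> P.@[fun j => y (enum_val j)] = 0) ->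
    P.@[fun j => x (enum_val j)] = 0.

(* affine cone of sigma_r(Y): closure of the union of the linear spans of
   r points of Y *)
Definition secant (r : nat) (X : (I -> C) -> Prop) : (I -> C) -> Prop :=
  zariski_closure (fun v => exists (a : 'I_r -> C) (vs : 'I_r -> I -> C),
    (forall i, X (vs i)) /\ forall j, v j = \sum_(i < r) a i * vs i j).

End Ambient.

(* Plücker coordinates of wedge^k C^n are indexed by strictly increasing
   maps 'I_k -> 'I_n (basis e_{f 0} /\ ... /\ e_{f (k-1)}). *)
Definition pluecker_idx (k n : nat) :=
  {f : {ffun 'I_k -> 'I_n} | [forall i : 'I_k, forall j : 'I_k, (i < j)%N ==> (f i < f j)%N]}.

Definition pluecker (C : fieldType) (k n : nat) (M : 'M[C]_(k, n))
  (f : pluecker_idx k n) : C :=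
  \det (\matrix_(i < k, j < k) M i (val f j)).

(* cone over G(k,n): Plücker vectors v_1 /\ ... /\ v_k (rows of M) *)
Definition grassmannian (C : fieldType) (k n : nat) : (pluecker_idx k n -> C) -> Prop :=
  fun v => exists M : 'M[C]_(k, n), forall f, v f = pluecker M f.

(* monomial coefficients: index = monomials x^e in x_0..x_n of degree d *)
Definition mon_idx (n d : nat) := {m : 'X_{1..n.+1 < d.+1} | mdeg (val m) == d}.

Definition form_coords (C : fieldType) (n d : nat) (P : {mpoly C[n.+1]}) :
  mon_idx n d -> C := fun e => P@_(val (val e)).

Definition tangential (C : fieldType) (n d : nat) : (mon_idx n d -> C) -> Prop :=
  zariski_closure (fun v => exists L M : {mpoly C[n.+1]},
    L \is 1.-homog /\ M \is 1.-homog /\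
    forall e, v e = @form_coords _ _ d (L ^+ d.-1 * M) e).

Definition chow (C : fieldType) (n d : nat) : (mon_idx n d -> C) -> Prop :=
  fun v => exists Ls : 'I_d -> {mpoly C[n.+1]},
    (forall i, Ls i \is 1.-homog) /\
    forall e, v e = @form_coords _ _ d (\prod_(i < d) Ls i) e.

Definition reducible (C : fieldType) (n : nat) (ds : seq nat) :
  (mon_idx n (sumn ds) -> C) -> Prop :=
  fun v => exists Fs : 'I_(size ds) -> {mpoly C[n.+1]},
    (forall i, Fs i \is (nth 0%N ds i).-homog) /\
    forall e, v e = @form_coords _ _ (sumn ds) (\prod_(i < size ds) Fs i) e.

Definition Y_or_secant (C : fieldType) (I : finType) (Y : (I -> C) -> Prop)
  (X : (I -> C) -> Prop) : Prop :=
  X = Y \/ exists r : nat, (1 <= r)%N /\ X = secant r Y.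

(* Main.v *)
Require Import Defs.
From HB Require Import structures.
From mathcomp Require Import all_boot all_order all_algebra.
From mathcomp Require Import reals complex mpoly.
From mathcomp Require Import ring perm.
From Stdlib Require Import FunctionalExtensionality.
Set Implicit Arguments.
Unset Strict Implicit.
Unset Printing Implicit Defensive.
Import Order.TTheory GRing.Theory Num.Theory.
Local Open Scope ring_scope.

Section Core.
Variables (C : closedFieldType) (I : finType).

Lemma interp_poly (phi : I -> C) (h : I -> C) : injective phi ->
  exists P : {poly C}, (size P <= size (index_enum I))%N /\ forall i, P.[phi i] = h i.
Proof.
move=> phiI.
pose c j := h j / \prod_(l <- index_enum I | l != j) (phi j - phi l).
exists (\sum_(j <- index_enum I) c j *: \prod_(l <- index_enum I | l != j) ('X - (phi l)%:P)).
split.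
  apply: leq_trans (size_sum _ _ _) _.
  apply/bigmax_leqP => j _.
  apply: leq_trans (size_scale_leq _ _) _.
  rewrite -big_filter size_prod_XsubC size_filter.
  have := count_predC (fun l => l != j) (index_enum I).
  have : (0 < count (predC (fun l => l != j)) (index_enum I))%N.
    rewrite -has_count; apply/hasP; exists j; first exact: mem_index_enum.
    by rewrite /= eqxx.
  move=> H1 <-; rewrite -addn1 leq_add2l //.
move=> i; rewrite horner_sum (bigD1_seq i) ?mem_index_enum ?index_enum_uniq //=.
rewrite [X in _ + X]big1_seq ?addr0.
  rewrite hornerZ horner_prod.
  under eq_bigr => l _ do rewrite hornerXsubC.
  rewrite /c divfK //; rewrite prodf_seq_neq0; apply/allP => l _ /=.
  apply/implyP => lni; rewrite subr_eq0; apply/eqP => /phiI E.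
  by rewrite E eqxx in lni.
move=> j /andP [jni _]; rewrite hornerZ horner_prod -big_filter.
rewrite (bigD1_seq i) ?filter_uniq ?index_enum_uniq //=; last first.
  by rewrite mem_filter eq_sym jni mem_index_enum.
by rewrite hornerXsubC subrr mul0r mulr0.
Qed.

Lemma core (X : (I -> C) -> Prop) (g phi : I -> C) :
  (forall j, g j != 0) -> injective phi ->
  (forall z, X (fun j => g j * (phi j - z))) ->
  forall q, nonzero_vec q -> Hrk_finite X q.
Proof.
move=> g0 phiI HX q [j0 qj0].
pose N := size (index_enum I).
have [P [sP HP]] := interp_poly (fun j => q j / g j ^+ N) phiI.
pose Q := \prod_(l <- index_enum I) ('X - (phi l)%:P).
have sQ : size Q = N.+1 by rewrite size_prod_XsubC.
have sQP : size (Q + P) = N.+1 by rewrite size_polyDl sQ // ltnS.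
have lQP : lead_coef (Q + P) = 1.
  rewrite lead_coefDl ?sQ ?ltnS //; apply/monicP; exact: monic_prod_XsubC.
have [r Hr] := closed_field_poly_normal (Q + P).
rewrite lQP scale1r in Hr.
have sr : size r = N by move: sQP; rewrite Hr size_prod_XsubC => -[].
have Qev j : Q.[phi j] = 0.
  rewrite horner_prod (bigD1_seq j) ?mem_index_enum ?index_enum_uniq //=.
  by rewrite hornerXsubC subrr mul0r.
have ev j : \prod_(z <- r) (phi j - z) = q j / g j ^+ N.
  have := congr1 (fun p => p.[phi j]) Hr.
  rewrite /= hornerD Qev add0r HP horner_prod => ->.
  by apply: eq_bigr => z _; rewrite hornerXsubC.
have ev' j : \prod_(z <- r) (phi j - z) = q j / g j ^+ N.
  by rewrite ev.
pose ps := fun (i : 'I_N) (j : I) => g j * (phi j - nth 0 r i).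
have Hprod j : hadamard_prod ps j = q j.
  rewrite /hadamard_prod /ps big_split /= prodr_const card_ord.
  have -> : \prod_(i < N) (phi j - nth 0 r i) = \prod_(z <- r) (phi j - z).
    by rewrite (big_nth 0) sr big_mkord.
  by rewrite ev' mulrC divfK // expf_neq0.
have N0 : (0 < N)%N.
  by rewrite /N -has_predT; apply/hasP; exists j0; rewrite ?mem_index_enum.
exists N; split => //; exists ps; split; last split.
- move=> i; split; first exact: HX.
  exists j0; apply: contra qj0 => /eqP E.
  by rewrite -Hprod /hadamard_prod (bigD1 i) //= E mul0r.
- by exists j0; rewrite Hprod.
- by exists 1; split; [exact: oner_neq0 | move=> j; rewrite mul1r Hprod].
Qed.
End Core.
Section Dig.
Local Close Scope ring_scope.
Lemma digits_inj B n (a b : 'I_n -> nat) : (forall i, a i < B) -> (forall i, b i < B) ->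
  \sum_(i<n) a i * B^i = \sum_(i<n) b i * B^i -> a =1 b.
Proof.
elim: n a b => [|n IH] a b Ha Hb; first by move=> _ [].
rewrite !big_ord_recl /= !expn0 !muln1.
have sh c : \sum_(i<n) c (lift ord0 i) * B^(lift ord0 i) = B * \sum_(i<n) c (lift ord0 i) * B^i.
  rewrite big_distrr; apply: eq_bigr => i _; by rewrite lift0 expnS mulnCA.
rewrite !sh => E.
have a0 : a ord0 = b ord0.
  have := congr1 (modn^~ B) E; rewrite /= ![_ + B * _]addnC !(mulnC B) !modnMDl.
  by rewrite !modn_small.
move: E; rewrite a0 => /addnI /eqP; rewrite eqn_mul2l => /orP [/eqP B0|/eqP E].
  by move: (Ha ord0); rewrite B0.
have := IH (fun i => a (lift ord0 i)) (fun i => b (lift ord0 i)) (fun i => Ha _) (fun i => Hb _) E.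
move=> H i; case: (unliftP ord0 i) => [j ->|->] //; exact: H.
Qed.
End Dig.

Section Forms.
Variables (C : numClosedFieldType) (n : nat).
Local Notation MP := {mpoly C[n.+1]}.

Definition Lsum : MP := \sum_(i < n.+1) 'X_i.

Lemma derivL i : Lsum^`M(i) = 1.
Proof.
rewrite /Lsum linear_sum (bigD1 i) //= mderivX mnm1E eqxx.
have -> : (U_(i) - U_(i))%MM = 0%MM by apply/mnmP => j; rewrite mnmBE subnn mnm0E.
rewrite mpolyX0 scale1r big1 ?addr0 // => j ji.
by rewrite mderivX mnm1E (negbTE ji) scale0r.
Qed.

Lemma deriv_exp (p : MP) i d : (p ^+ d.+1)^`M(i) = (p ^+ d * p^`M(i)) *+ d.+1.
Proof.
elim: d => [|d IH]; first by rewrite expr1 expr0 mul1r.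
rewrite exprS mderivM IH.
rewrite -mulrnAr mulrA -exprS mulrnAr [_^`M(i) * _]mulrC.
by rewrite -mulrS.
Qed.

Lemma coefMXi_0 (q : MP) i (e : 'X_{1..n.+1}) : e i = 0%N -> (q * 'X_i)@_e = 0.
Proof.
move=> ei; rewrite mcoeffM big1 // => -[k1 k2] /= /eqP ek.
rewrite mcoeffX; case: eqP => [Ek|]; last by rewrite mulr0.
have := congr1 (fun m : 'X_{1..n.+1} => m i) ek.
by rewrite /= ei mnmDE -Ek mnm1E eqxx addn1.
Qed.

Lemma coef_derivX (p : MP) i (e : 'X_{1..n.+1}) :
  (p^`M(i) * 'X_i)@_e = p@_e *+ e i.
Proof.
case Ei: (e i) => [|k]; first by rewrite mulr0n coefMXi_0.
have De : e = (U_(i) + (e - U_(i)))%MM.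
  apply/mnmP => j; rewrite mnmDE mnmBE mnm1E.
  by case: eqP => [<-|]; rewrite ?Ei //= ?add0n ?subn0 // subn1 add1n.
rewrite {1}De mcoeffMX mcoeff_mderiv.
have -> : ((e - U_(i)) + U_(i))%MM = e by rewrite addmC -De.
by rewrite mnmBE mnm1E eqxx Ei subn1.
Qed.

Lemma form_coef d (b : 'I_n.+1 -> C) (e : 'X_{1..n.+1}) :
  (Lsum ^+ d * \sum_i b i *: 'X_i)@_e *+ d.+1 =
  (\sum_i b i * (e i)%:R) * (Lsum ^+ d.+1)@_e.
Proof.
rewrite -mcoeffMn.
have -> : Lsum ^+ d * (\sum_i b i *: 'X_i) *+ d.+1 =
  \sum_i b i *: ((Lsum ^+ d.+1)^`M(i) * 'X_i).
  rewrite mulr_sumr -sumrMnl; apply: eq_bigr => i _.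
  by rewrite deriv_exp derivL mulr1 -scalerAr scalerMnr mulrnAl.
rewrite raddf_sum mulr_suml; apply: eq_bigr => i _.
by rewrite /= mcoeffZ coef_derivX -[_ *+ e i]mulr_natr mulrA mulrAC.
Qed.

Lemma Lexp_coef_neq0 d (e : 'X_{1..n.+1}) : mdeg e = d -> (Lsum ^+ d)@_e != 0.
Proof.
elim: d e => [|d IH] e He.
  move/eqP: He; rewrite mdeg_eq0 => /eqP ->; by rewrite expr0 mcoeff1 eqxx oner_neq0.
have [i ei] : exists i, (0 < e i)%N.
  apply/existsP; move: He; rewrite mdegE; apply: contraPT; rewrite negb_exists => /forallP H.
  rewrite big1 // => i _; move: (H i); by rewrite lt0n negbK => /eqP.
pose m := (e - U_(i))%MM.
have Hm : mdeg m = d.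
  have : mdeg (m + U_(i)) = d.+1.
    rewrite -He; congr mdeg; apply/mnmP => j; rewrite mnmDE mnmBE mnm1E.
    by case: eqP => [<-|]; rewrite ?subn0 ?addn0 // subn1 addn1 prednK.
  by rewrite mdegD mdeg1 addn1 => -[].
have := IH m Hm.
have := mcoeff_mderiv i (Lsum ^+ d.+1) m.
rewrite deriv_exp derivL mulr1 mcoeffMn => E.
apply: contra => /eqP H0.
have : (Lsum ^+ d)@_m *+ d.+1 = 0.
  rewrite E; suff -> : (m + U_(i))%MM = e by rewrite H0 mul0rn.
  apply/mnmP => j; rewrite mnmDE mnmBE mnm1E.
  by case: eqP => [<-|]; rewrite ?subn0 ?addn0 // subn1 addn1 prednK.
by move/eqP; rewrite mulrn_eq0 /= => H.
Qed.


Lemma coord_le (m : 'X_{1..n.+1}) i : (m i <= mdeg m)%N.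
Proof. by rewrite mdegE (bigD1 i) //= leq_addr. Qed.

Lemma forms_core d (X : (mon_idx n d.+1 -> C) -> Prop) :
  (forall b : 'I_n.+1 -> C, X (@form_coords C n d.+1 (Lsum ^+ d * \sum_i b i *: 'X_i))) ->
  forall q, nonzero_vec q -> Hrk_finite X q.
Proof.
move=> HX q q0.
pose B := d.+2.
pose g (e : mon_idx n d.+1) := (Lsum ^+ d.+1)@_(val (val e)) / d.+1%:R.
pose phi (e : mon_idx n d.+1) := (\sum_(i < n.+1) (val (val e)) i * B ^ i)%N%:R : C.
have dn0 : d.+1%:R != 0 :> C by rewrite pnatr_eq0.
have degE (e : mon_idx n d.+1) : mdeg (val (val e)) = d.+1 by apply/eqP; exact: (valP e).
apply: (core (g:=g) (phi:=phi)) => //.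
- move=> e; rewrite /g mulf_neq0 ?invr_eq0 // Lexp_coef_neq0 //.
- move=> e e' /eqP; rewrite /phi eqr_nat => /eqP E.
  have dg (f : mon_idx n d.+1) i : ((val (val f)) i < B)%N.
    by rewrite /B ltnS; apply: leq_trans (coord_le _ i) _; rewrite degE.
  have H := digits_inj (dg e) (dg e') E.
  by apply: val_inj; apply: val_inj; apply/mnmP => i; exact: H.
- move=> z.
  pose b (i : 'I_n.+1) := (B ^ i)%N%:R - z / d.+1%:R : C.
  have -> : (fun e => g e * (phi e - z)) = @form_coords C n d.+1 (Lsum ^+ d * \sum_i b i *: 'X_i).
    apply: functional_extensionality => e; rewrite /form_coords.
    apply: (mulIf dn0); rewrite [RHS]mulr_natr form_coef.
    have -> : \sum_i b i * (val (val e) i)%:R = phi e - z.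
      rewrite /b /phi; under eq_bigr => i _ do rewrite mulrBl.
      rewrite sumrB natr_sum; congr (_ - _).
        by apply: eq_bigr => i _; rewrite natrM mulrC.
      by rewrite -mulr_sumr -natr_sum -mdegE degE divfK.
    by rewrite /g mulrAC divfK // mulrC.
  exact: HX.
Qed.

Lemma deg0_case (X : (mon_idx n 0 -> C) -> Prop) :
  X (fun _ => 1) -> forall q, nonzero_vec q -> Hrk_finite X q.
Proof.
move=> HX q [j0 qj0].
have all_eq (j : mon_idx n 0) : j = j0.
  have E (f : mon_idx n 0) : val (val f) = 0%MM by apply/eqP; rewrite -mdeg_eq0; exact: (valP f).
  by apply: val_inj; apply: val_inj; rewrite !E.
have hp : hadamard_prod (fun (_ : 'I_1) (_ : mon_idx n 0) => 1 : C) = fun _ => 1.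
  by apply: functional_extensionality => j; rewrite /hadamard_prod big1.
exists 1%N; split => //; exists (fun _ _ => 1); split; last split.
- by move=> i; split => //; exists j0; exact: oner_neq0.
- by rewrite hp; exists j0; exact: oner_neq0.
- by exists (q j0); split => // j; rewrite hp mulr1 (all_eq j).
Qed.

End Forms.

Section G1.
Local Close Scope ring_scope.
Lemma incr_eq k n (f f' : 'I_k -> 'I_n) :
  (forall i j : 'I_k, i < j -> f i < f j) -> (forall i j : 'I_k, i < j -> f' i < f' j) ->
  (forall l : 'I_n, \sum_j (f j == l) = \sum_j (f' j == l)) -> f =1 f'.
Proof.
move=> Hf Hf' Hc.
pose s (h : 'I_k -> 'I_n) := [seq val (h j) | j <- enum 'I_k].
have ss (h : 'I_k -> 'I_n) : (forall i j : 'I_k, i < j -> h i < h j) -> sorted ltn (s h).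
  move=> Hh; rewrite /s -map_comp; apply: (homo_sorted (e := fun i j : 'I_k => i < j)).
    by move=> i j /Hh.
  have := iota_ltn_sorted 0 k; rewrite -val_enum_ord sorted_map enumT unlock; exact.
have key (h : 'I_k -> 'I_n) x : (x \in s h) = (\sum_j (val (h j) == x) != 0).
  rewrite sum_nat_eq0 negb_forall; apply/mapP/existsP => [[j _ ->]|[j]].
    by exists j; rewrite eqxx.
  by rewrite /= eqb0 negbK => /eqP <-; exists j; rewrite ?mem_enum.
have E : s f = s f'.
  apply: (irr_sorted_eq ltn_trans ltnn); [exact: ss | exact: ss |].
  move=> x; rewrite !key; case: (ltnP x n) => [xn|xn].
    congr (_ != 0); have := Hc (Ordinal xn).
    congr (_ = _); apply: eq_bigr => j _; by rewrite -val_eqE.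
  by rewrite !big1 // => j _; apply/eqP; rewrite eqb0; apply: contraTN xn => /eqP <-;
    rewrite -ltnNge ltn_ord.
move=> j; have := congr1 (fun s => nth 0 s j) E.
by rewrite /s !(nth_map j) -?enumT ?size_enum_ord // nth_ord_enum => /val_inj.
Qed.

Lemma pow_sum_cnt k n (f : 'I_k -> 'I_n) :
  \sum_j 2 ^ (f j) = \sum_(l < n) (\sum_j (f j == l)) * 2 ^ l.
Proof.
rewrite (eq_bigr (fun j => \sum_(l < n) (f j == l) * 2 ^ l)); last first.
  move=> j _; rewrite (bigD1 (f j)) //= eqxx mul1n big1 ?addn0 // => l.
  by rewrite eq_sym => /negbTE ->.
rewrite exchange_big; apply: eq_bigr => l _; by rewrite big_distrl.
Qed.

Lemma cnt_lt2 k n (f : 'I_k -> 'I_n) : injective f -> forall l, \sum_j (f j == l) < 2.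
Proof.
move=> finj l; case: (pickP (fun j => f j == l)) => [j0 /eqP fj0 | none].
  rewrite (bigD1 j0) //= fj0 eqxx big1 // => j jj0.
  case: eqP => // Ej; move: jj0; rewrite -fj0 in Ej; by rewrite (finj _ _ Ej) eqxx.
by rewrite big1 // => j _; rewrite none.
Qed.

End G1.

Section Grass.
Variables (C : numClosedFieldType) (k' n : nat).
Local Notation k := k'.+1.

Definition tt (l : nat) : C := (2 ^ (2 ^ l))%N%:R.
Definition Mz (z : C) : 'M[C]_(k, n) :=
  \matrix_(i, l) (if i == ord0 then tt l ^+ k - z else tt l ^+ i).
Definition af (f : pluecker_idx k n) : 'rV[C]_k := \row_j tt (val f j).
Definition Vd (f : pluecker_idx k n) := \det (Vandermonde k (af f)).
Definition sp : 'S_k := perm (@ord_pred_inj k).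
Definition sg : C := (-1) ^+ perm.odd_perm sp.

Lemma ord_pred0 : nat_of_ord (ord_pred (ord0 : 'I_k)) = k'.
Proof. by rewrite /= modn_small. Qed.
Lemma ord_predS (i : 'I_k) : i != ord0 -> (nat_of_ord (ord_pred i)).+1 = i.
Proof.
case: i => [[|i] Hi] //= _; rewrite modnDr modn_small //.
exact: ltnW.
Qed.

Lemma pl_z f z : pluecker (Mz z) f = Vd f * (sg * \prod_j tt (val f j) - z).
Proof.
pose U := \matrix_(i, j) (Vandermonde k (af f) i j * af f 0 j).
rewrite /pluecker (@determinant_multilinear _ _ _ (row_perm sp U) (Vandermonde k (af f)) ord0 1 (- z)).
- rewrite row_permE det_mulmx det_perm -/sg /U -mul_mx_diag det_mulmx det_diag -/(Vd f).
  have -> : \prod_i af f 0 i = \prod_j tt (val f j) by apply: eq_bigr => j _; rewrite /af mxE.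
  ring.
- by apply/rowP => j; rewrite !mxE permE eqxx ord_pred0 expr0 !mulr1 mul1r -exprSr.
- apply/matrixP => i j; rewrite !mxE permE.
  have ne : lift ord0 i != ord0 by rewrite eq_sym neq_lift.
  by rewrite (negbTE ne) -exprSr ord_predS.
- apply/matrixP => i j; rewrite !mxE.
  have ne : lift ord0 i != ord0 by rewrite eq_sym neq_lift.
  by rewrite (negbTE ne).
Qed.


Lemma tt_inj a b : tt a = tt b -> a = b.
Proof. by move/eqP; rewrite /tt eqr_nat !eqn_exp2l // => /eqP. Qed.

Lemma incr (f : pluecker_idx k n) (i j : 'I_k) : (i < j)%N -> (val f i < val f j)%N.
Proof. by move: (valP f) => /forallP/(_ i)/forallP/(_ j)/implyP. Qed.

Lemma incr_inj (f : pluecker_idx k n) : injective (val f).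
Proof.
move=> i j E; case: (ltngtP i j) => [ij|ji|/val_inj //].
  by have := @incr f _ _ ij; rewrite E ltnn.
by have := @incr f _ _ ji; rewrite E ltnn.
Qed.

Lemma grass_hrk q : nonzero_vec q -> Hrk_finite (@grassmannian C k n) q.
Proof.
apply: (core (g := Vd) (phi := fun f => sg * \prod_j tt (val f j))).
- move=> f; rewrite /Vd det_Vandermonde; apply/prodf_neq0 => i _; apply/prodf_neq0 => j ij.
  rewrite /af !mxE subr_eq0; apply/eqP => /tt_inj E.
  by have := @incr f _ _ ij; rewrite E ltnn.
- move=> f f' /(mulfI _) E.
  have {E} : \prod_j tt (val f j) = \prod_j tt (val f' j) by apply: E; rewrite signr_eq0.
  rewrite /tt -!natr_prod -!expn_sum => /eqP; rewrite eqr_nat eqn_exp2l // => /eqP.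
  rewrite !pow_sum_cnt => E.
  have H := digits_inj (cnt_lt2 (@incr_inj f)) (cnt_lt2 (@incr_inj f')) E.
  apply: val_inj; apply/ffunP => j; exact: (incr_eq (@incr f) (@incr f') H).
- by move=> z; exists (Mz z) => f; rewrite pl_z.
Qed.

End Grass.


Lemma sub_secant (C : fieldType) (I : finType) (Y : (I -> C) -> Prop) r :
  (1 <= r)%N -> forall v, Y v -> secant r Y v.
Proof.
case: r => // r _ v Yv P HP; apply: HP.
exists (fun i => if i == ord0 then 1 else 0), (fun _ => v); split => // j.
rewrite big_ord_recl eqxx mul1r big1 ?addr0 // => i _.
by have := neq_lift ord0 i; rewrite eq_sym => /negbTE ->; rewrite mul0r.
Qed.

Lemma Y_sub (C : fieldType) (I : finType) (Y X : (I -> C) -> Prop) :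
  Y_or_secant Y X -> forall v, Y v -> X v.
Proof. by case=> [-> //|[r [r1 ->]]]; exact: sub_secant. Qed.

Lemma hrk_mono (C : fieldType) (I : finType) (Y X : (I -> C) -> Prop) q :
  (forall v, Y v -> X v) -> Hrk_finite Y q -> Hrk_finite X q.
Proof.
move=> HYX [m [m0 [ps [H1 H2]]]]; exists m; split => //; exists ps; split => // i.
by have [Y1 nz] := H1 i; split => //; exact: HYX.
Qed.

Lemma prod_pow_sumn (R : comNzRingType) (x : R) s :
  \prod_(i < size s) x ^+ nth 0%N s i = x ^+ sumn s.
Proof.
elim: s => [|a s IH]; first by rewrite big_ord0 expr0.
rewrite /= big_ord_recl /= exprD -IH; congr (_ * _).
Qed.

Section Homog.
Variables (C : numClosedFieldType) (n : nat).
Lemma Lsum_homog : @Lsum C n \is 1.-homog.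
Proof. apply: rpred_sum => i _; rewrite dhomogX; apply/mdeg1P; by exists i. Qed.
Lemma M_homog (b : 'I_n.+1 -> C) : (\sum_i b i *: 'X_i : {mpoly C[n.+1]}) \is 1.-homog.
Proof. apply: rpred_sum => i _; apply: rpredZ; rewrite dhomogX; apply/mdeg1P; by exists i. Qed.
End Homog.

Theorem mainTheorem9 (R : realType) :
  (* (a) Grassmannians *)
  (forall (k n : nat), (1 <= k)%N -> (k < n)%N ->
     forall X, Y_or_secant (@grassmannian R[i] k n) X ->
     forall q, nonzero_vec q -> Hrk_finite X q) /\
  (* (b) tangential varieties *)
  (forall (d n : nat), (1 <= d)%N -> (1 <= n)%N ->
     forall X, Y_or_secant (@tangential R[i] n d) X ->
     forall q, nonzero_vec q -> Hrk_finite X q) /\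
  (* (c) Chow varieties *)
  (forall (d n : nat),
     forall X, Y_or_secant (@chow R[i] n d) X ->
     forall q, nonzero_vec q -> Hrk_finite X q) /\
  (* (d) varieties of reducible forms *)
  (forall (n : nat) (ds : seq nat), all (fun x => (0 < x)%N) ds ->
     forall X, Y_or_secant (@reducible R[i] n ds) X ->
     forall q, nonzero_vec q -> Hrk_finite X q).
Proof.
Proof.
split; [|split; [|split]].
- move=> k n k1 _ X HX q q0; case: k k1 X HX q q0 => // k' _ X HX q q0.
  apply: hrk_mono (Y_sub HX) _; exact: grass_hrk.
- move=> d n d1 _ X HX q q0; case: d d1 X HX q q0 => // d _ X HX q q0.
  apply: hrk_mono (Y_sub HX) _; apply: forms_core => // b P HP; apply: HP.
  exists (@Lsum _ n), (\sum_i b i *: 'X_i); split; [exact: Lsum_homog|split => //].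
  exact: M_homog.
- move=> d n X HX q q0; apply: hrk_mono (Y_sub HX) _.
  case: d X HX q q0 => [|d] X HX q q0.
    apply: deg0_case => //; exists (fun _ => 1); split; first by case.
    move=> e; rewrite /form_coords big_ord0 mcoeff1.
    by have := valP e; rewrite /= mdeg_eq0 => ->.
  apply: forms_core => // b.
  exists (fun i : 'I_d.+1 => if i == ord_max then \sum_i b i *: 'X_i else @Lsum _ n).
  split.
    by move=> i; case: ifP => _; [exact: M_homog | exact: Lsum_homog].
  move=> e; rewrite /form_coords [in RHS]big_ord_recr /= ?eqxx.
  congr (mcoeff _ (_ * _)).
  transitivity (\prod_(i < d) @Lsum R[i] n); first by rewrite prodr_const card_ord.
  by apply: eq_bigr => i _; rewrite -val_eqE /= ltn_eqF.
- move=> n ds hpos X HX q q0; apply: hrk_mono (Y_sub HX) _.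
  case: ds hpos X HX q q0 => [|d0 ds] hpos X HX q q0.
    apply: deg0_case => //; exists (fun _ => 1); split; first by case.
    move=> e; rewrite /form_coords big_ord0 mcoeff1.
    by have := valP e; rewrite /= mdeg_eq0 => ->.
  case: d0 hpos X HX q q0 => // d0 hpos X HX q q0.
  apply: (@forms_core _ _ (d0 + sumn ds)) => // b.
  exists (fun i : 'I_(size (d0.+1 :: ds)) =>
    if i == ord0 then @Lsum _ n ^+ d0 * \sum_i b i *: 'X_i
    else @Lsum _ n ^+ nth 0%N (d0.+1 :: ds) i).
  split.
    move=> i; case: ifP => [/eqP ->|_] /=.
      by have := dhomogM (dhomogMn d0 (@Lsum_homog R[i] n)) (M_homog b); rewrite mul1n addn1.
    by have := dhomogMn (nth 0%N (d0.+1 :: ds) i) (@Lsum_homog R[i] n); rewrite mul1n.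
  move=> e; rewrite /form_coords [in RHS]big_ord_recl /= ?eqxx; congr (mcoeff _ _).
  rewrite (eq_bigr (fun i : 'I_(size ds) => @Lsum _ n ^+ nth 0%N ds i)); last first.
    by move=> i _; rewrite add0n.
  by rewrite prod_pow_sumn exprD mulrAC.
Qed.
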